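(* If $\varphi$ is a closed block-labelled formula in disjunctive form, then $\mathrm{dec}_s(\mathrm{enc}(\varphi), \varphi, \emptyset) =_f \varphi$, for any bijective renaming $f$ of propositional variables such that $f(X^k) = [\varphi[X^k]]^k$ for every $X^k\in\mathrm{bv}(\varphi)$.
   Context: An LTS is a tuple $(\Sigma, A, \to, s_0)$ with state set $\Sigma$, label set $A$, transition relation $\to\,\subseteq \Sigma\times A\times\Sigma$ (written $s \xrightarrow{a} s'$) and initial state $s_0$. Block-labelled formulas in disjunctive form are generated by $\varphi ::= \mathbf{ff} \mid \varphi_1 \lor \varphi_2 \mid \langle a\rangle\varphi_0 \mid \mu X^k.\varphi_0 \mid \neg\varphi_0 \mid X^k$, where $a$ ranges over action labels, $X$ over propositional variables and $k\in\mathbb{N}$ is a block number attached to every variable occurrence. $\mathrm{fv}(\varphi)$ and $\mathrm{bv}(\varphi)$ denote the free and bound variables; $\varphi$ is closed if $\mathrm{fv}(\varphi)=\emptyset$. All bound variables are assumed to have distinct names, and for $X^k\in\mathrm{bv}(\varphi)$, $\varphi[X^k]$ denotes the unique sub-formula of $\varphi$ of the form $\mu X^k.\varphi_0$. Encoding: $\mathrm{enc}(\varphi)$ is the LTS whose states are the sub-formulas of $\varphi$, with initial state $\varphi$, where $\mathbf{ff}$ has no outgoing transitions and the transitions are exactly: $X^k \xrightarrow{\lor} \varphi[X^k]$; $\neg\varphi_0 \xrightarrow{\neg} \varphi_0$; $\langle a\rangle\varphi_0 \xrightarrow{\langle a\rangle}\varphi_0$; $\varphi_1\lor\varphi_2 \xrightarrow{\lor}\varphi_1$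 and $\varphi_1\lor\varphi_2\xrightarrow{\lor}\varphi_2$; $\mu X^k.\varphi_0 \xrightarrow{\mu^k}\varphi_0$. (Labels are the symbols $\lor$, $\neg$, $\langle a\rangle$, $\mu^k$.) Decoding: for an LTS $P$ with labels of the forms $\lor,\neg,\langle a\rangle,\mu^k$, a state $s$ and a set $E$ of states, $\mathrm{dec}_s(P,s,E) = \bigvee_{s\xrightarrow{\sigma}s' \in P}\mathrm{dec}_t(P, s\xrightarrow{\sigma}s', E)$ (a disjunction built with binary $\lor$ in some enumeration order of the outgoing transitions; the empty disjunction is $\mathbf{ff}$), where $\mathrm{dec}_t(P,s\xrightarrow{\lor}s',E)=\mathrm{dec}_s(P,s',E)$, $\mathrm{dec}_t(P,s\xrightarrow{\neg}s',E)=\neg\mathrm{dec}_s(P,s',E)$, $\mathrm{dec}_t(P,s\xrightarrow{\langle a\rangle}s',E)=\langle a\rangle\mathrm{dec}_s(P,s',E)$, and $\mathrm{dec}_t(P,s\xrightarrow{\mu^k}s',E)$ equals $[s]^k$ if $s\in E$ and $\mu [s]^k.\mathrm{dec}_s(P,s',E\cup\{s\})$ otherwise. Here $[s]^k$ denotes a propositional variable with block number $k$ uniquely determined by the pair $(s,k)$. Equality modulo renaming, commutativity and idempotence: for a bijection $f$ on propositional variables, $=_f$ is the smallest relation on formulas such that whenever $\varphi_i =_f \varphi_i'$ ($i\in\{0,1,2\}$): $\mathbf{ff}=_f\mathbf{ff}$, $\neg\varphi_0=_f\neg\varphi_0'$, $\langle a\rangle\varphi_0=_f\langle a\rangle\varphi_0'$,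 $\varphi_1\lor\varphi_2=_f\varphi_1'\lor\varphi_2'$, $X=_f f(X)$ and $\mu X.\varphi_0=_f\mu f(X).\varphi_0'$ for every variable $X$; $\varphi_1\lor\varphi_2 =_f \varphi_2'\lor\varphi_1'$; $\varphi_0\lor\varphi_0=_f\varphi_0'$ and $\varphi_0=_f\varphi_0'\lor\varphi_0'$. *)

(* Defs.v *)
From Stdlib Require Import List.
Import ListNotations.
Set Implicit Arguments.

Section Formulas.
Variables (A : Type)   (* names of propositional variables (without block number) *)
          (L : Type).

(* A propositional variable X^k is the pair (X, k). *)
Inductive form : Type :=
| FF : form
| Or : form -> form -> form
| Dia : L -> form -> form
| Mu : A -> nat -> form -> form
| Neg : form -> form
| Var : A -> nat -> form.

Inductive subform : form -> form -> Prop :=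
| sub_refl p : subform p p
| sub_or1 p a b : subform p a -> subform p (Or a b)
| sub_or2 p a b : subform p b -> subform p (Or a b)
| sub_dia p c q : subform p q -> subform p (Dia c q)
| sub_mu p x k q : subform p q -> subform p (Mu x k q)
| sub_neg p q : subform p q -> subform p (Neg q).

Inductive free_in (v : A * nat) : form -> Prop :=
| fr_var x k : v = (x, k) -> free_in v (Var x k)
| fr_or1 a b : free_in v a -> free_in v (Or a b)
| fr_or2 a b : free_in v b -> free_in v (Or a b)
| fr_dia c q : free_in v q -> free_in v (Dia c q)
| fr_neg q : free_in v q -> free_in v (Neg q)
| fr_mu x k q : free_in v q -> v <> (x, k) -> free_in v (Mu x k q).

Definition closed (phi : form) : Prop := forall v, ~ free_in v phi.

(* the list of binder occurrences; "all bound variables have distinct names"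
   is NoDup (binders phi) *)
Fixpoint binders (phi : form) : list (A * nat) :=
  match phi with
  | FF | Var _ _ => []
  | Or a b => binders a ++ binders b
  | Dia _ q | Neg q => binders q
  | Mu x k q => (x, k) :: binders q
  end.

Inductive label : Type :=
| LOr : label
| LNeg : label
| LDia : L -> label
| LMu : nat -> label.

Record lts (S : Type) : Type := {
  states : S -> Prop;
  trans : S -> label -> S -> Prop;
  init : S }.

(* transitions of enc(r) (before restricting sources to sub-formulas of r) *)
Inductive step (r : form) : form -> label -> form -> Prop :=
| st_var x k q : subform (Mu x k q) r -> step r (Var x k) LOr (Mu x k q)
| st_neg q : step r (Neg q) LNeg q
| st_dia c q : step r (Dia c q) (LDia c) q
| st_or1 a b : step r (Or a b) LOr a
| st_or2 a b : step r (Or a b) LOr b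
| st_mu x k q : step r (Mu x k q) (LMu k) q.

Definition enc (phi : form) : lts form :=
  {| states := fun s => subform s phi;
     trans := fun s l s' => subform s phi /\ step phi s l s';
     init := phi |}.

(* Decoding, as a relation (the result depends on the chosen enumeration
   order of outgoing transitions; only terminating decodings are derivable).
   [s]^k is the variable (name s k, k). *)
Section Dec.
Variables (S : Type) (name : S -> nat -> A) (P : lts S).

Inductive dec_s : S -> list S -> form -> Prop :=
| DecS s E (ts : list (label * S)) psi :
    NoDup ts ->
    (forall l s', In (l, s') ts <-> trans P s l s') ->
    dec_list s E ts psi ->
    dec_s s E psi
with dec_list : S -> list S -> list (label * S) -> form -> Prop :=
| DL_nil s E : dec_list s E [] FF
| DL_one s E t psi : dec_t s t E psi -> dec_list s E [t] psi
| DL_cons s E t t' ts psi1 psi2 :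
    dec_t s t E psi1 -> dec_list s E (t' :: ts) psi2 ->
    dec_list s E (t :: t' :: ts) (Or psi1 psi2)
with dec_t : S -> label * S -> list S -> form -> Prop :=
| DT_or s s' E psi : dec_s s' E psi -> dec_t s (LOr, s') E psi
| DT_neg s s' E psi : dec_s s' E psi -> dec_t s (LNeg, s') E (Neg psi)
| DT_dia s c s' E psi : dec_s s' E psi -> dec_t s (LDia c, s') E (Dia c psi)
| DT_mu_in s k s' E : In s E -> dec_t s (LMu k, s') E (Var (name s k) k)
| DT_mu_out s k s' E psi :
    ~ In s E -> dec_s s' (s :: E) psi ->
    dec_t s (LMu k, s') E (Mu (name s k) k psi).
End Dec.

Inductive eqf (f : A * nat -> A * nat) : form -> form -> Prop :=
| eq_ff : eqf f FF FF
| eq_neg p p' : eqf f p p' -> eqf f (Neg p) (Neg p')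
| eq_dia c p p' : eqf f p p' -> eqf f (Dia c p) (Dia c p')
| eq_or a b a' b' : eqf f a a' -> eqf f b b' -> eqf f (Or a b) (Or a' b')
| eq_var x k : eqf f (Var x k) (Var (fst (f (x, k))) (snd (f (x, k))))
| eq_mu x k p p' : eqf f p p' ->
    eqf f (Mu x k p) (Mu (fst (f (x, k))) (snd (f (x, k))) p')
| eq_comm a b a' b' : eqf f a a' -> eqf f b b' -> eqf f (Or a b) (Or b' a')
| eq_idem_l p p' : eqf f p p' -> eqf f (Or p p) p'
| eq_idem_r p p' : eqf f p p' -> eqf f p (Or p' p').

End Formulas.

Definition bijective_map {X : Type} (f : X -> X) : Prop :=
  exists g : X -> X, (forall x, g (f x) = x) /\ (forall y, f (g y) = y).

(* Main.v *)
Require Import Defs.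
From Stdlib Require Import List Classical Lia.
Import ListNotations.

Fixpoint fsize {A L : Type} (p : form A L) : nat :=
  match p with
  | FF _ _ => 1 | Var _ _ _ => 1
  | Or a b => S (fsize a + fsize b)
  | Dia _ q | Neg q | Mu _ _ q => S (fsize q)
  end.

Lemma subform_trans {A L : Type} (p q r : form A L) :
  subform p q -> subform q r -> subform p r.
Proof. intros H1 H2; induction H2; eauto using subform. Qed.

Lemma mu_in_binders {A L : Type} x k (q p : form A L) :
  subform (Mu x k q) p -> In (x, k) (binders p).
Proof.
  intro H; induction p; inversion H; subst; simpl; auto using in_or_app.
Qed.

Lemma nodup_disj {T : Type} (l l' : list T) a :
  NoDup (l ++ l') -> In a l -> In a l' -> False.
Proof.
  intros H Ha Hb. apply in_split in Hb as (l1 & l2 & ->).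
  rewrite app_assoc in H. apply NoDup_remove_2 in H. apply H.
  apply in_or_app; left; apply in_or_app; auto.
Qed.

Lemma mu_unique {A L : Type} (p : form A L) x k q1 q2 :
  NoDup (binders p) -> subform (Mu x k q1) p -> subform (Mu x k q2) p -> q1 = q2.
Proof.
  induction p; simpl; intros Hn H1 H2; inversion H1; subst; inversion H2; subst.
  - eapply IHp1; eauto using NoDup_app_remove_r.
  - exfalso; eapply nodup_disj; eauto using mu_in_binders.
  - exfalso; eapply nodup_disj; eauto using mu_in_binders.
  - eapply IHp2; eauto using NoDup_app_remove_l.
  - eapply IHp; eauto.
  - reflexivity.
  - inversion Hn; subst. exfalso; eauto using mu_in_binders.
  - inversion Hn; subst. exfalso; eauto using mu_in_binders.
  - inversion Hn; subst. eapply IHp; eauto.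
  - eapply IHp; eauto.
Qed.

Lemma single_list {T : Type} {ts : list T} {t} :
  NoDup ts -> (forall y, In y ts <-> y = t) -> ts = [t].
Proof.
  intros Hn H. destruct ts as [|u r].
  - exfalso; apply (proj2 (H t) eq_refl).
  - assert (Hu : u = t) by (apply H; left; auto). rewrite Hu in *.
    destruct r as [|v r]; auto. exfalso.
    assert (Hv : v = t) by (apply H; right; left; auto). rewrite Hv in *.
    inversion Hn as [|? ? Hni]; apply Hni; left; auto.
Qed.

Lemma two_list {T : Type} {ts : list T} {t1 t2} :
  t1 <> t2 -> NoDup ts -> (forall y, In y ts <-> y = t1 \/ y = t2) ->
  ts = [t1; t2] \/ ts = [t2; t1].
Proof.
  intros Hne Hn H. destruct ts as [|u r].
  - exfalso; apply (proj2 (H t1) (or_introl eq_refl)).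
  - inversion Hn; subst.
    assert (Hu : u = t1 \/ u = t2) by (apply H; left; auto).
    destruct Hu; subst; [left|right]; f_equal; apply single_list; auto;
      intro y; split; intro Hy.
    + destruct (proj1 (H y) (or_intror Hy)); subst; auto; contradiction.
    + subst. destruct (proj2 (H t2) (or_intror eq_refl)); auto; congruence.
    + destruct (proj1 (H y) (or_intror Hy)); subst; auto; contradiction.
    + subst. destruct (proj2 (H t1) (or_introl eq_refl)); auto; congruence.
Qed.

Lemma pairs_iff {K S : Type} {ts : list (K * S)} {P : K -> S -> Prop} {Q : K * S -> Prop} :
  (forall l s', In (l, s') ts <-> P l s') -> (forall l s', P l s' <-> Q (l, s')) ->
  forall y, In y ts <-> Q y.
Proof. intros H1 H2 [l s']. rewrite H1. apply H2. Qed.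



Ltac inv_dl := match goal with H : dec_list _ _ _ _ (_ :: _) _ |- _ => inversion H; subst; clear H end.
Ltac inv_dt := match goal with H : dec_t _ _ _ (_, _) _ _ |- _ => inversion H; subst; clear H end.
Ltac invall := repeat inv_dl; repeat inv_dt.

Definition Inv {A L : Type} (phi s : form A L) (E : list (form A L)) :=
  (forall e, In e E -> subform e phi /\ fsize s < fsize e) /\
  (forall x k, free_in (x, k) s -> exists q, In (Mu x k q) E).

Lemma mu_in_dec {A L : Type} (name : form A L -> nat -> A) (phi : form A L) x k q E :
  subform (Mu x k q) phi -> In (Mu x k q) E ->
  dec_s name (enc phi) (Mu x k q) E (Var L (name (Mu x k q) k) k) /\
  (forall psi, dec_s name (enc phi) (Mu x k q) E psi -> psi = Var L (name (Mu x k q) k) k).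
Proof.
  intros Hs Hin.
  assert (Htr : forall l s', trans (enc phi) (Mu x k q) l s' <-> (l, s') = (LMu L k, q)).
  { intros l s'; simpl; split.
    - intros [_ H]; inversion H; subst; auto.
    - intros H; inversion H; subst; split; auto; constructor. }
  split.
  - apply DecS with [(LMu L k, q)].
    + repeat constructor; auto.
    + intros l s'. rewrite Htr. simpl. split; [intros [H|[]]|]; auto.
    + apply DL_one. apply DT_mu_in; auto.
  - intros psi H. inversion H; subst.
    rewrite (single_list H0 (pairs_iff H1 Htr)) in H2.
    invall; auto. contradiction.
Qed.

Lemma main_dec {A L : Type} (name : form A L -> nat -> A) (f : A * nat -> A * nat) (phi : form A L) :
  NoDup (binders phi) ->
  (forall x k q, subform (Mu x k q) phi -> f (x, k) = (name (Mu x k q) k, k)) ->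
  forall s E, subform s phi -> Inv phi s E ->
  (exists psi, dec_s name (enc phi) s E psi) /\
  (forall psi, dec_s name (enc phi) s E psi -> eqf f s psi).
Proof.
  intros Hnd Hf s. induction s as [| a IHa b IHb | c q IH | x k q IH | q IH | x k];
    intros E Hs [HE Hfr].
  -
    assert (Htr : forall l s', trans (enc phi) (FF A L) l s' <-> False).
    { intros l s'; simpl; split; [intros [_ H]; inversion H | tauto]. }
    split.
    + exists (FF A L). apply DecS with []; [constructor| |constructor].
      intros l s'; rewrite Htr; simpl; tauto.
    + intros psi H. inversion H; subst. destruct ts as [|t ts].
      * inversion H2; subst; constructor.
      * exfalso. destruct t as [l s']. apply (Htr l s'). apply H1. left; auto.
  -
    assert (Hsa : subform a phi) by (eapply subform_trans; [|exact Hs]; repeat constructor).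
    assert (Hsb : subform b phi) by (eapply subform_trans; [|exact Hs]; repeat constructor).
    assert (Ia : Inv phi a E).
    { split; [intros e He; destruct (HE e He); simpl in *; split; auto; lia|].
      intros x k Hx; apply Hfr; apply fr_or1; auto. }
    assert (Ib : Inv phi b E).
    { split; [intros e He; destruct (HE e He); simpl in *; split; auto; lia|].
      intros x k Hx; apply Hfr; apply fr_or2; auto. }
    destruct (IHa E Hsa Ia) as [[pa Hpa] Ea].
    destruct (IHb E Hsb Ib) as [[pb Hpb] Eb].
    assert (Htr : forall l s', trans (enc phi) (Or a b) l s' <-> (l, s') = (LOr L, a) \/ (l, s') = (LOr L, b)).
    { intros l s'; simpl; split.
      - intros [_ H]; inversion H; subst; auto.
      - intros [H|H]; inversion H; subst; split; auto; constructor. }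
    destruct (classic (a = b)) as [<- | Hne].
    + assert (Htr1 : forall l s', trans (enc phi) (Or a a) l s' <-> (l, s') = (LOr L, a)).
      { intros l s'; rewrite Htr; tauto. }
      split.
      * exists pa. apply DecS with [(LOr L, a)].
        -- repeat constructor; auto.
        -- intros l s'. rewrite Htr1. simpl. split; [intros [H|[]]|]; auto.
        -- apply DL_one. apply DT_or; auto.
      * intros psi H. inversion H; subst.
        rewrite (single_list H0 (pairs_iff H1 Htr1)) in H2.
        invall. apply eq_idem_l; auto.
    + assert (Hne' : (LOr L, a) <> (LOr L, b)) by congruence.
      split.
      * exists (Or pa pb). apply DecS with [(LOr L, a); (LOr L, b)].
        -- constructor; [simpl; intros [H|[]]; auto|]. repeat constructor; auto.
        -- intros l s'. rewrite Htr. simpl. split; [intros [H|[H|[]]]|intros [H|H]]; auto.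
        -- apply DL_cons; [apply DT_or; auto|]. apply DL_one; apply DT_or; auto.
      * intros psi H. inversion H; subst.
        destruct (two_list Hne' H0 (pairs_iff H1 Htr)) as [-> | ->].
        -- invall. apply eq_or; auto.
        -- invall. apply eq_comm; auto.
  -
    assert (Hsq : subform q phi) by (eapply subform_trans; [|exact Hs]; repeat constructor).
    assert (Iq : Inv phi q E).
    { split; [intros e He; destruct (HE e He); simpl in *; split; auto; lia|].
      intros x k Hx; apply Hfr; apply fr_dia; auto. }
    destruct (IH E Hsq Iq) as [[pq Hpq] Eq].
    assert (Htr : forall l s', trans (enc phi) (Dia c q) l s' <-> (l, s') = (LDia c, q)).
    { intros l s'; simpl; split.
      - intros [_ H]; inversion H; subst; auto.
      - intros H; inversion H; subst; split; auto; constructor. }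
    split.
    + exists (Dia c pq). apply DecS with [(LDia c, q)].
      * repeat constructor; auto.
      * intros l s'. rewrite Htr. simpl. split; [intros [H|[]]|]; auto.
      * apply DL_one. apply DT_dia; auto.
    + intros psi H. inversion H; subst.
      rewrite (single_list H0 (pairs_iff H1 Htr)) in H2.
      invall. apply eq_dia; auto.
  -
    assert (Hsq : subform q phi) by (eapply subform_trans; [|exact Hs]; repeat constructor).
    assert (Iq : Inv phi q (Mu x k q :: E)).
    { split.
      - intros e [He|He]; [subst; simpl; split; auto|].
        destruct (HE e He); simpl in *; split; auto; lia.
      - intros y j Hy. destruct (classic ((y, j) = (x, k))) as [Heq|Hne].
        + inversion Heq; subst. exists q; left; auto.
        + destruct (Hfr y j) as [q' Hq']; [apply fr_mu; auto|]. exists q'; right; auto. }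
    destruct (IH _ Hsq Iq) as [[pq Hpq] Eq].
    assert (Hnot : ~ In (Mu x k q) E).
    { intro Hin. destruct (HE _ Hin). lia. }
    assert (Htr : forall l s', trans (enc phi) (Mu x k q) l s' <-> (l, s') = (LMu L k, q)).
    { intros l s'; simpl; split.
      - intros [_ H]; inversion H; subst; auto.
      - intros H; inversion H; subst; split; auto; constructor. }
    split.
    + exists (Mu (name (Mu x k q) k) k pq). apply DecS with [(LMu L k, q)].
      * repeat constructor; auto.
      * intros l s'. rewrite Htr. simpl. split; [intros [H|[]]|]; auto.
      * apply DL_one. apply DT_mu_out; auto.
    + intros psi H. inversion H; subst.
      rewrite (single_list H0 (pairs_iff H1 Htr)) in H2.
      invall; [contradiction|].
      pose proof (Hf x k q Hs) as Hfx.
      replace (Mu (name (Mu x k q) k) k psi0) with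
        (Mu (fst (f (x, k))) (snd (f (x, k))) psi0) by (rewrite Hfx; auto).
      apply eq_mu; auto.
  -
    assert (Hsq : subform q phi) by (eapply subform_trans; [|exact Hs]; repeat constructor).
    assert (Iq : Inv phi q E).
    { split; [intros e He; destruct (HE e He); simpl in *; split; auto; lia|].
      intros x k Hx; apply Hfr; apply fr_neg; auto. }
    destruct (IH E Hsq Iq) as [[pq Hpq] Eq].
    assert (Htr : forall l s', trans (enc phi) (Neg q) l s' <-> (l, s') = (LNeg L, q)).
    { intros l s'; simpl; split.
      - intros [_ H]; inversion H; subst; auto.
      - intros H; inversion H; subst; split; auto; constructor. }
    split.
    + exists (Neg pq). apply DecS with [(LNeg L, q)].
      * repeat constructor; auto.
      * intros l s'. rewrite Htr. simpl. split; [intros [H|[]]|]; auto.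
      * apply DL_one. apply DT_neg; auto.
    + intros psi H. inversion H; subst.
      rewrite (single_list H0 (pairs_iff H1 Htr)) in H2.
      invall. apply eq_neg; auto.
  -
    destruct (Hfr x k (fr_var _ eq_refl)) as [q Hq].
    assert (Hsq : subform (Mu x k q) phi) by (apply (HE _ Hq)).
    destruct (mu_in_dec name phi x k q E Hsq Hq) as [Hd Hu].
    assert (Htr : forall l s', trans (enc phi) (Var L x k) l s' <-> (l, s') = (LOr L, Mu x k q)).
    { intros l s'; simpl; split.
      - intros [_ H]; inversion H; subst. f_equal; f_equal. eapply mu_unique; eauto.
      - intros H; inversion H; subst; split; auto; constructor; auto. }
    split.
    + eexists. apply DecS with [(LOr L, Mu x k q)].
      * repeat constructor; auto.
      * intros l s'. rewrite Htr. simpl. split; [intros [H|[]]|]; auto.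
      * apply DL_one. apply DT_or. exact Hd.
    + intros psi H. inversion H; subst.
      rewrite (single_list H0 (pairs_iff H1 Htr)) in H2.
      invall. match goal with H : dec_s _ _ (Mu _ _ _) _ _ |- _ => rewrite (Hu _ H) end.
      pose proof (Hf x k q Hsq) as Hfx.
      replace (Var L (name (Mu x k q) k) k) with
        (Var L (fst (f (x, k))) (snd (f (x, k)))) by (rewrite Hfx; auto).
      apply eq_var.
Qed.

Theorem proposition2 (A L : Type) (name : form A L -> nat -> A)
    (f : A * nat -> A * nat) (phi : form A L) :
  closed phi ->
  NoDup (binders phi) ->
  bijective_map f ->
  (forall x k q, subform (Mu x k q) phi -> f (x, k) = (name (Mu x k q) k, k)) ->
  (exists psi, dec_s name (enc phi) phi [] psi) /\
  (forall psi, dec_s name (enc phi) phi [] psi -> eqf f phi psi).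
Proof.
  intros Hc Hnd _ Hf. apply main_dec; auto.
  - constructor.
  - split; [intros e []|]. intros x k Hx; exfalso; exact (Hc _ Hx).
Qed.
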